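(* Let $q$ be an odd prime power and $\varphi_4$ the coloring defined below (with $d=4$). No set $S\subseteq(\mathbb{F}_q^* )^4$ of $8$ vectors has a leftover structure under $\varphi_4$.
   Context: Let $d=4$. $\mathbb{F}_q^*$ is the set of nonzero elements of $\mathbb{F}_q$, endowed with an arbitrary fixed linear order; $(\mathbb{F}_q^* )^d$ is ordered lexicographically with respect to it. Let $C_d = \mathrm{DOT} \sqcup \mathrm{ZERO}\sqcup\mathrm{UP}\sqcup\mathrm{DOWN}$, where $\mathrm{DOT} = \mathbb{F}_q^*$ and ZERO, UP, DOWN are three disjoint copies of $\{1,\dots,d\}\times \mathbb{F}_q$. For distinct $x<y$ in $(\mathbb{F}_q^* )^d$, let $i$ be the first coordinate where $x$ and $y$ differ, and $x\cdot y$ the standard dot product; $\varphi_d(x,y)=\varphi_d(y,x)$ is $(i,x_i+y_i)$ in ZERO if $x\cdot y=0$; $(i,x_i+y_i)$ in UP if $x\cdot y\ne 0$ and $x\cdot y=x\cdot x$; $(i,x_i+y_i)$ in DOWN if $x\cdot y\notin\{0,x\cdot x\}$ and $x\cdot y=y\cdot y$; and $x\cdot y\in\mathrm{DOT}$ otherwise. For a vertex set $A$, $\varphi_d(A)$ is the set of colors on pairs inside $A$. $S$ has a leftover structure under $\varphi_d$ if $|S|=1$, or $S$ has a partition $S=A\cup B$ into nonempty sets such that $A$ and $B$ each have a leftover structure, $\varphi_d(A)\cap\varphi_d(B)=\emptyset$, and there is a color $\gamma$ with $\varphi_d(a,b)=\gamma$ for all $a\in A$, $b\in B$ and $\gamma\notin\varphi_d(A)\cup\varphi_d(B)$.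 *)

(* Defs.v *)
From HB Require Import structures.
From mathcomp Require Import all_boot all_order all_algebra all_field.
Set Implicit Arguments. Unset Strict Implicit. Unset Printing Implicit Defensive.
Import GRing.Theory.
Local Open Scope ring_scope.

Notation vec F := {ffun 'I_4 -> F}.

(* lt is a strict linear order on F^x (its values involving 0 are irrelevant) *)
Definition lin_order_nz (F : finFieldType) (lt : rel F) : Prop :=
  [/\ (forall a, a != 0 -> ~~ lt a a),
      (forall a b c, a != 0 -> b != 0 -> c != 0 -> lt a b -> lt b c -> lt a c)
    & (forall a b, a != 0 -> b != 0 -> a != b -> lt a b || lt b a)].

(* The color set C_4 = DOT ⊔ ZERO ⊔ UP ⊔ DOWN (DOT values are always nonzero). *)
Inductive color (F : finFieldType) :=
| DOT of F
| ZERO of 'I_4 & F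
| UP of 'I_4 & F
| DOWN of 'I_4 & F.

Section Coloring.
Variables (F : finFieldType) (lt : rel F).

Definition dotp (x y : vec F) : F := \sum_(i < 4) x i * y i.

(* first coordinate where x and y differ (ord0 if x = y) *)
Definition first_diff (x y : vec F) : 'I_4 :=
  odflt ord0 [pick i : 'I_4 | (x i != y i) &&
                  [forall j : 'I_4, ((j < i)%N ==> (x j == y j))]].

Definition lexlt (x y : vec F) : bool :=
  (x != y) && lt (x (first_diff x y)) (y (first_diff x y)).

(* color of the pair {x, y} assuming x < y *)
Definition col_ord (x y : vec F) : color F :=
  let i := first_diff x y in
  let s := x i + y i in
  if dotp x y == 0 then ZERO i s
  else if dotp x y == dotp x x then UP i s
  else if dotp x y == dotp y y then DOWN i s
  else DOT (dotp x y).

Definition phi4 (x y : vec F) : color F :=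
  if lexlt x y then col_ord x y else col_ord y x.

Definition in_colors (A : {set vec F}) (g : color F) : Prop :=
  exists a1 a2, [/\ a1 \in A, a2 \in A, a1 != a2 & phi4 a1 a2 = g].

Inductive leftover : {set vec F} -> Prop :=
| leftover_single (x : vec F) : leftover [set x]
| leftover_split (A B : {set vec F}) (g : color F) :
    A != set0 -> B != set0 -> [disjoint A & B] ->
    leftover A -> leftover B ->
    (forall c, in_colors A c -> ~ in_colors B c) ->
    (forall a b, a \in A -> b \in B -> phi4 a b = g) ->
    ~ in_colors A g -> ~ in_colors B g ->
    leftover (A :|: B).

End Coloring.

(* Main.v *)
Require Import Defs.
From mathcomp Require Import all_boot all_order all_algebra all_field.
From mathcomp Require Import zify.
Import GRing.Theory.
Local Open Scope ring_scope.
Set Implicit Arguments. Unset Strict Implicit.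

Section LA.
Variable F : finFieldType.
Local Notation vc := {ffun 'I_4 -> F}.

Definition rv (x : vc) : 'rV[F]_4 := \row_i x i.
Definition bf (u v : 'rV[F]_4) : F := (u *m v^T) 0 0.

Lemma bfE x y : bf (rv x) (rv y) = dotp x y.
Proof. by rewrite /bf /dotp !mxE; apply: eq_bigr => j _; rewrite !mxE. Qed.

Lemma bfC u v : bf u v = bf v u.
Proof.
rewrite /bf !mxE; apply: eq_bigr => j _; rewrite !mxE mulrC //.
Qed.

Lemma bfBl u1 u2 v : bf (u1 - u2) v = bf u1 v - bf u2 v.
Proof. by rewrite /bf mulmxBl !mxE. Qed.

Lemma bfDl u1 u2 v : bf (u1 + u2) v = bf u1 v + bf u2 v.
Proof. by rewrite /bf mulmxDl !mxE. Qed.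

Lemma bfBr u v1 v2 : bf u (v1 - v2) = bf u v1 - bf u v2.
Proof. by rewrite bfC bfBl !(bfC u). Qed.

Lemma kerP (u v : 'rV[F]_4) : (u <= kermx v^T)%MS = (bf u v == 0).
Proof.
rewrite sub_kermx /bf; apply/eqP/eqP => [-> |h]; first by rewrite mxE.
by apply/matrixP => i j; rewrite !ord1 h mxE.
Qed.

Lemma orth_sym m1 m2 (A : 'M[F]_(m1,4)) (B : 'M[F]_(m2,4)) :
  (A <= kermx B^T)%MS = (B <= kermx A^T)%MS.
Proof.
by rewrite !sub_kermx -(inj_eq (@trmx_inj _ _ _)) trmx_mul trmxK trmx0.
Qed.

Lemma orth_rank m1 m2 (M : 'M[F]_(m1,4)) (N : 'M[F]_(m2,4)) :
  (M <= kermx N^T)%MS -> (\rank M + \rank N <= 4)%N.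
Proof.
move/mxrankS; rewrite mxrank_ker mxrank_tr => h.
have := rank_leq_col N; lia.
Qed.

Definition U (X : {set vc}) : 'M[F]_4 :=
  (\sum_(x in X) \sum_(y in X) <<rv x - rv y>>)%MS.

Lemma U_gen (X : {set vc}) x y : x \in X -> y \in X -> (rv x - rv y <= U X)%MS.
Proof.
move=> hx hy; apply: (sumsmx_sup x) => //; apply: (sumsmx_sup y) => //.
by rewrite genmxE.
Qed.

Lemma U_sub m (X : {set vc}) (M : 'M[F]_(m,4)) :
  (forall x y, x \in X -> y \in X -> (rv x - rv y <= M)%MS) -> (U X <= M)%MS.
Proof.
move=> h; apply/sumsmx_subP => x hx; apply/sumsmx_subP => y hy.
by rewrite genmxE; apply: h.
Qed.

Lemma U_orth (X : {set vc}) v :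
  (forall x y, x \in X -> y \in X -> bf (rv x - rv y) v = 0) ->
  (U X <= kermx v^T)%MS.
Proof. by move=> h; apply: U_sub => x y hx hy; rewrite kerP h. Qed.

Lemma ker_bf m (M : 'M[F]_(m,4)) u v :
  (M <= kermx v^T)%MS -> (u <= M)%MS -> bf u v = 0.
Proof. by move=> h1 h2; apply/eqP; rewrite -kerP; apply: submx_trans h2 h1. Qed.

Lemma rank_add_row (M : 'M[F]_4) (w : 'rV[F]_4) :
  ~~ (w <= M)%MS -> (\rank M < \rank (M + w)%MS)%N.
Proof.
move=> hw; have h := mxrank_leqif_sup (addsmxSl M w).
by rewrite (ltn_leqif h) addsmx_sub submx_refl.
Qed.

End LA.

Section Core.
Variable F : finFieldType.
Local Notation vc := {ffun 'I_4 -> F}.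

Lemma U_subU (A B : {set vc}) : (U A <= U (A :|: B))%MS.
Proof. by apply: U_sub => x y hx hy; apply: U_gen; rewrite inE ?hx ?hy. Qed.

Lemma core_lb (A B : {set vc}) a0 b0 : a0 \in A -> b0 \in B ->
  (\rank (U A) + \rank (U B) <= 3)%N ->
  ((rv b0 - rv a0 <= U A + U B)%MS -> ~~ (U A <= U B)%MS && ~~ (U B <= U A)%MS) ->
  (\rank (U A) + \rank (U B) + ((\rank (U A) == 0%N) || (\rank (U B) == 0%N))
     <= \rank (U (A :|: B)))%N.
Proof.
move=> ha hb h3 hg.
set w := rv b0 - rv a0.
have hX : ((U A + U B) + w <= U (A :|: B))%MS.
  rewrite !addsmx_sub U_subU setUC U_subU /=.
  by apply: U_gen; rewrite inE ?ha ?hb ?orbT.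
have rX := mxrankS hX.
have hsc := mxrank_sum_cap (U A) (U B).
have hKA := mxrankS (capmxSl (U A) (U B)).
have hKB := mxrankS (capmxSr (U A) (U B)).
have hMw := mxrankS (addsmxSl (U A + U B)%MS w).
have hKeqA : \rank (U A :&: U B) = \rank (U A) -> (U A <= U B)%MS.
  move=> e; case: (mxrank_leqif_eq (capmxSl (U A) (U B))) => _.
  rewrite e eqxx => /esym /andP [_ h].
  exact: submx_trans h (capmxSr _ _).
have hKeqB : \rank (U A :&: U B) = \rank (U B) -> (U B <= U A)%MS.
  move=> e; case: (mxrank_leqif_eq (capmxSr (U A) (U B))) => _.
  rewrite e eqxx => /esym /andP [_ h].
  exact: submx_trans h (capmxSl _ _).
have hA0 : \rank (U A) = 0%N -> (U A <= U B)%MS.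
  by move/eqP; rewrite mxrank_eq0 => /eqP ->; apply: sub0mx.
have hB0 : \rank (U B) = 0%N -> (U B <= U A)%MS.
  by move/eqP; rewrite mxrank_eq0 => /eqP ->; apply: sub0mx.
case hw: (w <= U A + U B)%MS.
  move/andP: (hg hw) => [nAB nBA].
  have nA0 : \rank (U A) <> 0%N by move=> /hA0 h; rewrite h in nAB.
  have nB0 : \rank (U B) <> 0%N by move=> /hB0 h; rewrite h in nBA.
  have nKA : \rank (U A :&: U B) <> \rank (U A) by move=> /hKeqA h; rewrite h in nAB.
  have nKB : \rank (U A :&: U B) <> \rank (U B) by move=> /hKeqB h; rewrite h in nBA.
  have -> : ((\rank (U A) == 0%N) || (\rank (U B) == 0%N)) = false.
    by apply/negbTE; rewrite negb_or; apply/andP; split; apply/eqP.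
  rewrite addn0; lia.
have hlt := rank_add_row (negbT hw).
case: (boolP (\rank (U A) == 0%N)) => [/eqP eA|nA].
  rewrite eA /= addn1; lia.
case: (boolP (\rank (U B) == 0%N)) => [/eqP eB|nB].
  rewrite eB orbT addn1; lia.
move/eqP: nA; move/eqP: nB => nB nA /=.
rewrite addn0; lia.
Qed.

End Core.

Section Node.
Variable F : finFieldType.
Local Notation vc := {ffun 'I_4 -> F}.

Lemma dotpC (x y : vc) : dotp x y = dotp y x.
Proof. by rewrite /dotp; apply: eq_bigr => i _; rewrite mulrC. Qed.

Definition ev (i : 'I_4) : vc := [ffun j => (j == i)%:R].

Lemma dotp_ev x i : dotp x (ev i) = x i.
Proof.
rewrite /dotp (bigD1 i) //= big1 ?addr0 => [|j /negPf hj].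
  by rewrite ffunE eqxx mulr1.
by rewrite ffunE hj mulr0.
Qed.

Definition piv (P O : {set vc}) :=
  forall p o o', p \in P -> o \in O -> o' \in O -> dotp p o = dotp p o'.

Lemma N1 (P O : {set vc}) p0 : p0 \in P -> piv P O -> ~~ (rv p0 <= U P)%MS ->
  (\rank (U O) + \rank (U P) <= 3)%N.
Proof.
move=> hp0 hpiv hn.
have hN : (U O <= kermx (U P + rv p0)%MS^T)%MS.
  apply: U_sub => o o' ho ho'; rewrite orth_sym addsmx_sub; apply/andP; split.
    apply: U_orth => p p' hp hp'.
    by rewrite bfBl !bfBr !bfE (hpiv p o o') // (hpiv p' o o') // !subrr ?subr0.
  by rewrite kerP bfBr !bfE (hpiv p0 o o') // subrr.
have := orth_rank hN; have := rank_add_row hn; lia.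
Qed.

Lemma L2 (P : {set vc}) p0 v : p0 \in P ->
  (forall p p', p \in P -> p' \in P -> dotp p v = dotp p' v) -> dotp p0 v != 0 ->
  ~~ (rv p0 <= U P)%MS.
Proof.
move=> hp0 hc hn; apply/negP => h.
have hk : (U P <= kermx (rv v)^T)%MS.
  by apply: U_orth => p p' hp hp'; rewrite bfBl !bfE (hc p p') // subrr.
by have := ker_bf hk h; rewrite bfE => he; rewrite he eqxx in hn.
Qed.

Lemma Lw_nd (A B : {set vc}) a0 b0 v : a0 \in A -> b0 \in B ->
  (forall a a', a \in A -> a' \in A -> dotp a v = dotp a' v) ->
  (forall b b', b \in B -> b' \in B -> dotp b v = dotp b' v) ->
  dotp b0 v != dotp a0 v -> ~~ (rv b0 - rv a0 <= U A + U B)%MS.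
Proof.
move=> ha hb hA hB hn; apply/negP => h.
have hk : (U A + U B <= kermx (rv v)^T)%MS.
  rewrite addsmx_sub; apply/andP; split; apply: U_orth => x y hx hy.
    by rewrite bfBl !bfE (hA x y) // subrr.
  by rewrite bfBl !bfE (hB x y) // subrr.
have := ker_bf hk h; rewrite bfBl !bfE => /eqP; rewrite subr_eq0 => he.
by rewrite he in hn.
Qed.

Lemma Lg_dot (A B : {set vc}) a0 b0 c : a0 \in A -> b0 \in B ->
  (forall a b, a \in A -> b \in B -> dotp a b = c) ->
  dotp a0 a0 != c -> dotp b0 b0 != c ->
  (rv b0 - rv a0 <= U A + U B)%MS -> ~~ (U A <= U B)%MS && ~~ (U B <= U A)%MS.
Proof.
move=> ha hb hc na nb; case/sub_addsmxP => [[x1 x2]] /= e.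
have kB : (U B <= kermx (rv a0)^T)%MS.
  apply: U_orth => b b' hb1 hb2.
  by rewrite bfBl !bfE dotpC (hc a0 b) // dotpC (hc a0 b') // subrr.
have kA : (U A <= kermx (rv b0)^T)%MS.
  by apply: U_orth => a a' ha1 ha2; rewrite bfBl !bfE (hc a b0) // (hc a' b0) // subrr.
apply/andP; split; apply/negP => hsub.
  have h1 := ker_bf kB (submx_trans (submxMl x1 (U A)) hsub).
  have h2 := ker_bf kB (submxMl x2 (U B)).
  have : bf (rv b0 - rv a0) (rv a0) = 0 by rewrite e bfDl h1 h2 addr0.
  rewrite bfBl !bfE dotpC (hc a0 b0) // => /eqP; rewrite subr_eq0 eq_sym => he.
  by rewrite he in na.
have h1 := ker_bf kA (submxMl x1 (U A)).
have h2 := ker_bf kA (submx_trans (submxMl x2 (U B)) hsub).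
have : bf (rv b0 - rv a0) (rv b0) = 0 by rewrite e bfDl h1 h2 addr0.
rewrite bfBl !bfE (hc a0 b0) // => /eqP; rewrite subr_eq0 => he.
by rewrite he in nb.
Qed.

End Node.

Section Dec.
Variable F : finFieldType.
Variable lt : rel F.
Local Notation vc := {ffun 'I_4 -> F}.

Lemma first_diffC (x y : vc) : first_diff x y = first_diff y x.
Proof.
rewrite /first_diff; congr odflt; apply: eq_pick => i /=.
rewrite eq_sym; congr andb; apply: eq_forallb => j; by rewrite eq_sym.
Qed.

Lemma first_diffP (x y : vc) : x != y -> x (first_diff x y) != y (first_diff x y).
Proof.
move=> nxy; rewrite /first_diff; case: pickP => [i /andP [] //|H].
exfalso.
have [i0 hi0] : exists i, x i != y i.
  by apply/existsP; apply: contraR nxy => /existsPn h; apply/eqP/ffunP => i; apply/eqP; move: (h i); rewrite negbK.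
case: (@arg_minnP _ i0 (fun i => x i != y i) (fun i : 'I_4 => nat_of_ord i) hi0) => i hi hmin.
have := H i; rewrite hi /=; move/negP; apply; apply/forallP => j; apply/implyP => hj.
apply: contraLR hj => hj; rewrite -leqNgt; exact: hmin.
Qed.

Lemma phi4_DOT (a b : vc) c : phi4 lt a b = DOT c ->
  [/\ dotp a b = c, c != 0, dotp a a != c & dotp b b != c].
Proof.
rewrite /phi4 /col_ord /=; case: ifP => _.
  case: ifP => // h1; case: ifP => // h2; case: ifP => // h3 [<-].
  by split => //; rewrite ?h1 // eq_sym ?h2 ?h3.
case: ifP => // h1; case: ifP => // h2; case: ifP => // h3 [<-].
by split; [rewrite dotpC | rewrite h1 | rewrite eq_sym h3 | rewrite eq_sym h2].
Qed.

Lemma phi4_Z (a b : vc) i s : phi4 lt a b = ZERO i s ->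
  [/\ first_diff a b = i, a i + b i = s & dotp a b = 0].
Proof.
rewrite /phi4 /col_ord /=; case: ifP => _.
  case: ifP => [/eqP h1 [<- <-] //|h1]; case: ifP => // h2; case: ifP => //.
case: ifP => [/eqP h1 [<- <-]|h1]; last by case: ifP => // h2; case: ifP => //.
by rewrite first_diffC addrC dotpC.
Qed.

Lemma phi4_U (a b : vc) i s : phi4 lt a b = UP i s ->
  [/\ first_diff a b = i, a i + b i = s &
     if lexlt lt a b then dotp a b = dotp a a else dotp a b = dotp b b].
Proof.
rewrite /phi4 /col_ord /=; case: ifP => hl.
  case: ifP => // h1; case: ifP => [/eqP h2 [<- <-] //|h2]; case: ifP => //.
case: ifP => // h1; case: ifP => [/eqP h2 [<- <-]|h2]; last by case: ifP.
by rewrite first_diffC addrC dotpC.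
Qed.

Lemma phi4_D (a b : vc) i s : phi4 lt a b = DOWN i s ->
  [/\ first_diff a b = i, a i + b i = s &
     if lexlt lt a b then dotp a b = dotp b b else dotp a b = dotp a a].
Proof.
rewrite /phi4 /col_ord /=; case: ifP => hl.
  case: ifP => // h1; case: ifP => // h2; case: ifP => [/eqP h3 [<- <-] //|//].
case: ifP => // h1; case: ifP => // h2; case: ifP => [/eqP h3 [<- <-]|//].
by rewrite first_diffC addrC dotpC.
Qed.

End Dec.

Section Main.
Variable F : finFieldType.
Variable lt : rel F.
Local Notation vc := {ffun 'I_4 -> F}.

Lemma nd_case (A B : {set vc}) a0 b0 i : a0 \in A -> b0 \in B ->
  (forall a, a \in A -> a i = a0 i) -> (forall b, b \in B -> b i = b0 i) ->
  a0 i != b0 i -> a0 i != 0 -> b0 i != 0 -> piv A B \/ piv B A ->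
  (\rank (U A) + \rank (U B) <= 3)%N /\
  ((rv b0 - rv a0 <= U A + U B)%MS -> ~~ (U A <= U B)%MS && ~~ (U B <= U A)%MS).
Proof.
move=> ha hb hA hB hab na nb hp; split.
  case: hp => hp.
    rewrite addnC; apply: (N1 ha hp). apply: (L2 (v := @ev F i) ha).
      by move=> p p' hp1 hp2; rewrite !dotp_ev (hA p) // (hA p').
    by rewrite dotp_ev.
  apply: (N1 hb hp); apply: (L2 (v := @ev F i) hb).
    by move=> p p' hp1 hp2; rewrite !dotp_ev (hB p) // (hB p').
  by rewrite dotp_ev.
move=> h; exfalso; move: h; apply/negP; apply: (Lw_nd (v := @ev F i) ha hb).
- by move=> p p' hp1 hp2; rewrite !dotp_ev (hA p) // (hA p').
- by move=> p p' hp1 hp2; rewrite !dotp_ev (hB p) // (hB p').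
by rewrite !dotp_ev eq_sym.
Qed.

Lemma node (A B : {set vc}) g : A != set0 -> B != set0 -> [disjoint A & B] ->
  (forall x, x \in A :|: B -> forall i, x i != 0) ->
  (forall a b, a \in A -> b \in B -> phi4 lt a b = g) ->
  (\rank (U A) + \rank (U B) <= 3)%N /\
  (\rank (U A) + \rank (U B) + ((\rank (U A) == 0%N) || (\rank (U B) == 0%N))
     <= \rank (U (A :|: B)))%N.
Proof.
move=> nA nB dis hnz hg.
case/set0Pn: nA => a0 ha0; case/set0Pn: nB => b0 hb0.
have hne : forall a b, a \in A -> b \in B -> a != b.
  by move=> a b ha hb; apply/eqP => e; move: (disjointFr dis ha); rewrite e hb.
have hnzA : forall a, a \in A -> forall i, a i != 0.
  by move=> a ha; apply: hnz; rewrite inE ha.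
have hnzB : forall b, b \in B -> forall i, b i != 0.
  by move=> b hb; apply: hnz; rewrite inE hb orbT.
suff [h3 hw] : (\rank (U A) + \rank (U B) <= 3)%N /\
  ((rv b0 - rv a0 <= U A + U B)%MS -> ~~ (U A <= U B)%MS && ~~ (U B <= U A)%MS).
  by split => //; apply: core_lb ha0 hb0 h3 hw.
have ndc : forall i s,
    (forall a b, a \in A -> b \in B -> first_diff a b = i /\ a i + b i = s) ->
    piv A B \/ piv B A ->
    (\rank (U A) + \rank (U B) <= 3)%N /\
    ((rv b0 - rv a0 <= U A + U B)%MS -> ~~ (U A <= U B)%MS && ~~ (U B <= U A)%MS).
  move=> i s hfd hp; apply: (nd_case (i := i) ha0 hb0) => //.
  - move=> a ha; have [_ e1] := hfd a b0 ha hb0; have [_ e2] := hfd a0 b0 ha0 hb0.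
    by apply: (addIr (b0 i)); rewrite e1 e2.
  - move=> b hb; have [_ e1] := hfd a0 b ha0 hb; have [_ e2] := hfd a0 b0 ha0 hb0.
    by apply: (addrI (a0 i)); rewrite e1 e2.
  - by have [<- _] := hfd a0 b0 ha0 hb0; apply: first_diffP; apply: hne.
  - exact: hnzA.
  - exact: hnzB.
have hlex : forall i s,
    (forall a b, a \in A -> b \in B -> first_diff a b = i /\ a i + b i = s) ->
    forall a b, a \in A -> b \in B -> lexlt lt a b = lt (a0 i) (b0 i).
  move=> i s hfd a b ha hb; rewrite /lexlt (hne a b) //=.
  have [-> _] := hfd a b ha hb.
  have [_ e1] := hfd a b0 ha hb0; have [_ e2] := hfd a0 b0 ha0 hb0.
  have [_ e3] := hfd a0 b ha0 hb.
  have -> : a i = a0 i by apply: (addIr (b0 i)); rewrite e1 e2.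
  have -> : b i = b0 i by apply: (addrI (a0 i)); rewrite e3 e2.
  done.
case: g hg => [c|i s|i s|i s] hg.
- have hd := fun a b ha hb => phi4_DOT (hg a b ha hb).
  have hc : forall a b, a \in A -> b \in B -> dotp a b = c.
    by move=> a b ha hb; have [] := hd a b ha hb.
  have [_ c0 na nb] := hd a0 b0 ha0 hb0.
  split; last by apply: Lg_dot ha0 hb0 hc na nb.
  rewrite addnC; apply: (N1 ha0).
    by move=> p o o' hp ho ho'; rewrite (hc p o) // (hc p o').
  apply: (L2 (v := b0) ha0); last by rewrite (hc a0 b0).
  by move=> p p' hp hp'; rewrite (hc p b0) // (hc p' b0).
- have hz := fun a b ha hb => phi4_Z (hg a b ha hb).
  apply: (ndc i s).
    by move=> a b ha hb; have [] := hz a b ha hb.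
  left => p o o' hp ho ho'.
  by have [_ _ ->] := hz p o hp ho; have [_ _ ->] := hz p o' hp ho'.
- have hu := fun a b ha hb => phi4_U (hg a b ha hb).
  have hfd : forall a b, a \in A -> b \in B -> first_diff a b = i /\ a i + b i = s.
    by move=> a b ha hb; have [] := hu a b ha hb.
  apply: (ndc i s hfd).
  case hl: (lt (a0 i) (b0 i)).
    left => p o o' hp ho ho'.
    have [_ _] := hu p o hp ho; rewrite (hlex i s hfd p o hp ho) hl => ->.
    by have [_ _] := hu p o' hp ho'; rewrite (hlex i s hfd p o' hp ho') hl => ->.
  right => p o o' hp ho ho'.
  have [_ _] := hu o p ho hp; rewrite (hlex i s hfd o p ho hp) hl dotpC => ->.
  by have [_ _] := hu o' p ho' hp; rewrite (hlex i s hfd o' p ho' hp) hl dotpC => ->.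
- have hu := fun a b ha hb => phi4_D (hg a b ha hb).
  have hfd : forall a b, a \in A -> b \in B -> first_diff a b = i /\ a i + b i = s.
    by move=> a b ha hb; have [] := hu a b ha hb.
  apply: (ndc i s hfd).
  case hl: (lt (a0 i) (b0 i)).
    right => p o o' hp ho ho'.
    have [_ _] := hu o p ho hp; rewrite (hlex i s hfd o p ho hp) hl dotpC => ->.
    by have [_ _] := hu o' p ho' hp; rewrite (hlex i s hfd o' p ho' hp) hl dotpC => ->.
  left => p o o' hp ho ho'.
  have [_ _] := hu p o hp ho; rewrite (hlex i s hfd p o hp ho) hl => ->.
  by have [_ _] := hu p o' hp ho'; rewrite (hlex i s hfd p o' hp ho') hl => ->.
Qed.

Lemma key (X : {set vc}) : leftover lt X ->
  (forall x, x \in X -> forall i, x i != 0) ->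
  (#|X| <= 2 * \rank (U X) + (\rank (U X) == 0%N))%N.
Proof.
elim => [x|A B g nA nB dis lA IHA lB IHB _ hg _ _] hnz.
  by rewrite cards1; case: (\rank (U [set x])) => [|n].
have hA := IHA (fun x hx => hnz x ltac:(by rewrite inE hx)).
have hB := IHB (fun x hx => hnz x ltac:(by rewrite inE hx orbT)).
have [_ h] := node nA nB dis hnz hg.
have hc : #|A :|: B| = (#|A| + #|B|)%N.
  by have := cardsUI A B; move: (dis); rewrite -setI_eq0 => /eqP ->; rewrite cards0 addn0.
rewrite hc.
move: h hA hB.
case: (\rank (U A) == 0%N) / eqP => eA; case: (\rank (U B) == 0%N) / eqP => eB /=;
  case: (\rank (U (A :|: B)) == 0%N) / eqP => eX /=; lia.
Qed.

End Main.

Unset Implicit Arguments. Set Strict Implicit.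

Theorem corollary3p13 (F : finFieldType) (lt : rel F) :
  odd #|F| -> lin_order_nz lt ->
  forall S : {set {ffun 'I_4 -> F}},
    (forall x, x \in S -> forall i, x i != 0) ->
    #|S| = 8%N ->
    ~ leftover lt S.
Proof.
move=> _ _ S hnz hc hl.
destruct hl as [x|A B g nA nB dis lA lB _ hg _ _].
  by rewrite cards1 in hc.
have hA := key lA (fun x hx => hnz x ltac:(by rewrite inE hx)).
have hB := key lB (fun x hx => hnz x ltac:(by rewrite inE hx orbT)).
have [h3 _] := node nA nB dis hnz hg.
have hc' : #|A :|: B| = (#|A| + #|B|)%N.
  by have := cardsUI A B; move: (dis); rewrite -setI_eq0 => /eqP ->; rewrite cards0 addn0.
rewrite hc' in hc.
move: h3 hA hB hc.
case: (\rank (U A) == 0%N) / eqP => eA; case: (\rank (U B) == 0%N) / eqP => eB /=; lia.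
Qed.
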